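(* Let $F$ be a distribution on $[0,\infty)$ with a long-tailed density $f$ on $[\widehat x,\infty)$. Suppose one of the following holds: (i) there exists $c>0$ such that $f(y)\ge cf(x)$ for all $y\in(x,2x]$ and all sufficiently large $x$; (ii) $g(x)=-\ln f(x)$ is concave for $x\ge x_0$ for some $x_0$, and for some function $h(x)\to\infty$ one has $f(x+t)\sim f(x)$ as $x\to\infty$ uniformly in $|t|\le h(x)$ and $x\,e^{-g(h(x))}\to0$ as $x\to\infty$. Then $f$ is subexponential, i.e. $F\in\mathcal S_{ac}$.
   Context: A distribution $F$ has a density $f$ on $[\widehat x,\infty)$ if $F(B)=\int_Bf(y)dy$ for Borel $B\subseteq[\widehat x,\infty)$. Such a density is long-tailed if it is bounded on $[\widehat x,\infty)$, $f(x)>0$ for all large $x$, and $f(x+t)\sim f(x)$ as $x\to\infty$ uniformly in $t\in[0,1]$. $F\in\mathcal S_{ac}$ if $f$ is long-tailed and $2\int_0^{\widehat x}f(x-y)F(dy)+\int_{\widehat x}^{x-\widehat x}f(x-y)f(y)dy\sim2f(x)$ as $x\to\infty$. *)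

(* Defs.v *)
From HB Require Import structures.
From mathcomp Require Import all_boot all_order all_algebra.
From mathcomp Require Import all_classical all_reals all_analysis.
Set Implicit Arguments. Unset Strict Implicit. Unset Printing Implicit Defensive.
Import Order.TTheory GRing.Theory Num.Theory.
Import numFieldNormedType.Exports.
Local Open Scope classical_set_scope.
Local Open Scope ring_scope.

Definition has_density_on {R : realType} (F : probability R R) (f : R -> R)
    (xh : R) : Prop :=
  measurable_fun `[xh, +oo[ f /\
  (forall y, xh <= y -> 0 <= f y) /\
  forall B : set R, measurable B -> B `<=` `[xh, +oo[ ->
    F B = (\int[lebesgue_measure]_(y in B) (f y)%:E)%E.

Definition asym_equiv {R : realType} (a b : R -> R) : Prop :=
  (fun x => a x / b x) x @[x --> +oo] --> (1 : R).

Definition long_tailed_density {R : realType} (f : R -> R) (xh : R) : Prop :=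
  (exists M : R, forall x, xh <= x -> `|f x| <= M) /\
  (\forall x \near +oo, 0 < f x) /\
  (forall eps : R, 0 < eps -> \forall x \near +oo,
     forall t : R, 0 <= t <= 1 -> `|f (x + t) / f x - 1| <= eps).

Definition S_ac {R : realType} (F : probability R R) (f : R -> R) (xh : R)
  : Prop :=
  long_tailed_density f xh /\
  asym_equiv
    (fun x => 2 * Rintegral F `[0, xh[ (fun y => f (x - y))
              + Rintegral lebesgue_measure `[xh, x - xh] (fun y => f (x - y) * f y))
    (fun x => 2 * f x).

Definition concave_on {R : realType} (g : R -> R) (A : set R) : Prop :=
  forall x y l, A x -> A y -> 0 <= l <= 1 ->
    l * g x + (1 - l) * g y <= g (l * x + (1 - l) * y).

(* Main.v *)
Require Import Defs.
From HB Require Import structures.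
From mathcomp Require Import all_boot all_order all_algebra.
From mathcomp Require Import all_classical all_reals all_analysis.
From mathcomp Require Import ring lra.
From mathcomp Require Import measurable_realfun.
Import Order.TTheory GRing.Theory Num.Theory.
Import numFieldNormedType.Exports.
Local Open Scope classical_set_scope.
Local Open Scope ring_scope.

Lemma near_ex (R : realType) (P : R -> Prop) : (\forall x \near +oo, P x) ->
  exists M, forall x, M < x -> P x.
Proof. by case=> M [_ HM]; exists M. Qed.

Lemma ex_near (R : realType) (P : R -> Prop) M : (forall x, M < x -> P x) ->
  \forall x \near +oo, P x.
Proof. by move=> H; exists M; split => //; exact: num_real. Qed.

Lemma gtmax (R : realType) (a b x : R) : Num.max a b < x -> a < x /\ b < x.
Proof. by rewrite gt_max => /andP[]. Qed.

Lemma fin_arith (R : realType) (I1 I2 Pf Tf c : R) :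
  `|I1 - Pf| <= c / 3 -> 0 <= I2 -> I2 <= c / 3 -> 0 <= Tf -> Tf <= c / 3 ->
  `|I1 + I2 - (Pf + Tf)| <= c.
Proof. rewrite !ler_norml => /andP[h1 h2] h3 h4 h5 h6; apply/andP; split; lra. Qed.

Section Prop11.
Variable R : realType.
Variables (F : probability R R) (f : R -> R) (xh : R).
Hypothesis LT : long_tailed_density f xh.

Lemma pos_ev : exists M, forall x, M < x -> 0 < f x.
Proof. by case: LT => _ [/near_ex H _]. Qed.

Lemma step1 (e : R) : 0 < e -> exists M, forall x, M < x -> 0 < f x /\
  forall t : R, 0 <= t <= 1 -> `|f (x + t) - f x| <= e * f x.
Proof.
move=> e0; case: LT => _ [_ /(_ e e0)/near_ex [M1 H1]].
have [M2 H2] := pos_ev.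
exists (Num.max M1 M2) => x; move/gtmax => [x1 x2].
have fx := H2 _ x2; split => // t t01.
have -> : f (x + t) - f x = (f (x + t) / f x - 1) * f x.
  by rewrite mulrBl divfK ?gt_eqF// mul1r.
by rewrite normrM (gtr0_norm fx); apply: ler_wpM2r; [exact: ltW | exact: H1].
Qed.

Lemma LTpos n (e : R) : 0 < e -> exists M, forall x, M < x -> 0 < f x /\
  forall t : R, 0 <= t <= n%:R -> `|f (x + t) - f x| <= e * f x.
Proof.
elim: n e => [|n IH] e e0.
  have [M H] := pos_ev; exists M => x /H fx; split => // t /andP[t0 t1].
  have -> : t = 0 by apply/eqP; rewrite eq_le t0 andbT.
  by rewrite addr0 subrr normr0 mulr_ge0 ?ltW.
pose d := Num.min (e / 3) 1.
have d0 : 0 < d by rewrite lt_min ltr01 andbT divr_gt0.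
have de : d <= e / 3 by rewrite ge_min lexx.
have d1 : d <= 1 by rewrite ge_min lexx orbT.
have [M1 H1] := IH d d0; have [M2 H2] := @step1 d d0.
exists (Num.max M1 M2) => x; move/gtmax => [x1 x2].
have [fx Hx] := H1 x x1; split => // t /andP[t0 tn].
have [tn'|tn'] := leP t n%:R.
  have := Hx t; rewrite t0 tn' => /(_ isT) H.
  apply: (le_trans H); apply: ler_wpM2r; first exact: ltW.
  apply: (le_trans de); lra.
have xn : M2 < x + n%:R by have := ler0n R n; lra.
have [_ H3] := H2 _ xn.
have tn1 : t <= n%:R + 1 by rewrite natr1.
have := H3 (t - n%:R); have -> : 0 <= t - n%:R <= 1 by apply/andP; split; lra.
move=> /(_ isT); have -> : x + n%:R + (t - n%:R) = x + t by ring.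
have := Hx n%:R; rewrite lexx ler0n => /(_ isT).
move: (f (x + t)) (f (x + n%:R)) (f x) fx => a b c c0.
rewrite !ler_norml => /andP[h1 h2] /andP[h3 h4].
apply/andP; split; nra.
Qed.

Lemma LTneg (K e : R) : 0 < e -> exists M, forall x, M < x -> 0 < f x /\
  forall y : R, 0 <= y <= K -> `|f (x - y) - f x| <= e * f x.
Proof.
move=> e0.
pose n := Num.Def.archi_bound `|K|.
have Kn : K <= n%:R := le_trans (ler_norm K) (ltW (archi_boundP (normr_ge0 K))).
pose d := Num.min (e / 2) (1 / 2).
have d0 : 0 < d by rewrite lt_min !divr_gt0.
have de : d <= e / 2 by rewrite ge_min lexx.
have d1 : d <= 1 / 2 by rewrite ge_min lexx orbT.
have [M H] := @LTpos n d d0.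
exists (M + n%:R) => x xM.
have xM' : M < x by have := ler0n R n; lra.
have [fx _] := H x xM'; split => // y /andP[y0 yK].
have zM : M < x - y by lra.
have [fz Hz] := H (x - y) zM.
have := Hz y; rewrite y0 (le_trans yK Kn) => /(_ isT).
rewrite subrK.
move: (f (x - y)) (f x) fz fx => a b a0 b0.
rewrite !ler_norml => /andP[h1 h2].
have ha : a <= 2 * b by nra.
apply/andP; split; nra.
Qed.

Hypotheses (xh0 : 0 <= xh) (F0 : F `[0%R, +oo[%classic = 1%E)
  (Fd : has_density_on F f xh).
Local Notation mu := (@lebesgue_measure R).

Lemma mrefl (x : R) : measurable_fun setT (fun y : R => x - y).
Proof. exact: measurable_realfun.measurable_funB. Qed.

Lemma refl_meas (x : R) (A : set R) : measurable A ->
  pushforward mu ((fun y : R => x - y) : _ -> measurableTypeR R) A = mu A.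
Proof.
move=> mA; apply/esym/lebesgue_measure_unique => //; first exact: mrefl.
move=> mp X [[a b] _ <-].
change (mu `]a, b] = mu ((fun y : R => x - y) @^-1` `]a, b])).
have -> : (fun y : R => x - y) @^-1` `]a, b] = `[x - b, x - a[%classic.
  by apply/seteqP; split => y /=; rewrite !in_itv /= => /andP[h1 h2]; apply/andP; split; lra.
rewrite !lebesgue_measure_itv /= !lte_fin.
have -> : (x - b < x - a) = (a < b) by apply/idP/idP => h; lra.
by case: ifP => // _; congr (_%:E); ring.
Qed.

Lemma refl_int (x : R) (D : set R) (g : R -> R) : measurable D ->
  measurable_fun D g -> (forall y, D y -> 0 <= g y) ->
  Rintegral mu D g = Rintegral mu ((fun y => x - y) @^-1` D) (fun y => g (x - y)).
Proof.
move=> mD mg g0; rewrite /Rintegral; congr fine.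
rewrite -(@ge0_integral_pushforward _ _ (measurableTypeR R) (measurableTypeR R) _
  (fun y : R => x - y) (mrefl x) mu D (fun y => (g y)%:E) mD).
- apply: eq_measure_integral; first exact: mrefl.
  move=> mp B mB _; exact: (esym (refl_meas x B mB)).
- change (measurable_fun D (EFin \o g)); exact/measurable_EFinP.
- by move=> y /[!inE] Dy; rewrite lee_fin g0.
Qed.

Lemma fbound : exists Mb : R, 0 <= Mb /\ forall y, xh <= y -> `|f y| <= Mb.
Proof.
case: LT => [[M HM] _]; exists M; split => //.
exact: le_trans (normr_ge0 _) (HM xh (lexx _)).
Qed.

Lemma f_ge0 y : xh <= y -> 0 <= f y.
Proof. by case: Fd => _ [+ _]; apply. Qed.

Lemma mf : measurable_fun `[xh, +oo[ f.
Proof. by case: Fd. Qed.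

Lemma Fint {B : set R} : measurable B -> B `<=` `[xh, +oo[ ->
  F B = (\int[mu]_(y in B) (f y)%:E)%E.
Proof. by case: Fd => _ [_ H]; apply: H. Qed.

Lemma Rint_f {B : set R} : measurable B -> B `<=` `[xh, +oo[ -> Rintegral mu B f = fine (F B).
Proof. by move=> mB BS; rewrite (Fint mB BS). Qed.

Lemma Ffin {B : set R} : measurable B -> F B \is a fin_num.
Proof. by move=> mB; apply: fin_num_measure. Qed.

Lemma Fle1 {B : set R} : measurable B -> 0 <= fine (F B) <= 1.
Proof.
move=> mB; rewrite fine_ge0 ?measure_ge0//=.
have := probability_le1 F mB; rewrite -[X in (_ <= X)%E]/(1%:E).
by rewrite -(fineK (Ffin mB)) lee_fin.
Qed.

Lemma int_f {B : set R} : measurable B -> B `<=` `[xh, +oo[ -> mu.-integrable B (EFin \o f).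
Proof.
move=> mB BS; apply/integrableP; split.
  by apply/measurable_EFinP; apply: (measurable_funS _ BS mf).
have -> : (\int[mu]_(y in B) `|(EFin \o f) y|)%E = (\int[mu]_(y in B) (f y)%:E)%E.
  apply: eq_integral => y /[!inE] /BS; rewrite /= in_itv /= andbT => /f_ge0 h.
  by rewrite ger0_norm.
by rewrite -Fint// -(fineK (Ffin mB)) ltry.
Qed.

Lemma mshift (x : R) (D : set R) : measurable D -> (forall y, D y -> xh <= x - y) ->
  measurable_fun D (fun y => f (x - y)).
Proof.
move=> mD H; apply: (measurable_comp (F := `[xh, +oo[%classic)) => //.
- by move=> _ [y Dy <-]; rewrite /= in_itv /= andbT; exact: H.
- exact: mf.
- exact: measurable_funTS (mrefl x).
Qed.

Lemma bint d (T : measurableType d) (m : {measure set T -> \bar R}) D (g : T -> R) M :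
  measurable D -> (m D < +oo)%E -> measurable_fun D g ->
  (forall y, D y -> `|g y| <= M) -> m.-integrable D (EFin \o g).
Proof.
move=> mD mDf mg gM; apply: measurable_bounded_integrable => //.
exists M; split; first exact: num_real.
by move=> M' MM' y Dy /=; apply: le_trans (gM y Dy) (ltW MM').
Qed.

Lemma int_conv (x : R) (D : set R) : measurable D -> D `<=` `[xh, x - xh] ->
  mu.-integrable D (EFin \o (fun y => f (x - y) * f y)).
Proof.
move=> mD DS; have [Mb [Mb0 HMb]] := fbound.
have Hy y : D y -> xh <= y /\ xh <= x - y.
  by move=> /DS; rewrite /= in_itv /= => /andP[h1 h2]; split; lra.
apply: (@bint _ _ mu D (fun y => f (x - y) * f y) (Mb * Mb)) => //.
- apply: (@le_lt_trans _ _ (mu `[xh, x - xh])).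
    by apply: le_measure => //; rewrite inE.
  by rewrite lebesgue_measure_itv /=; case: ifP => _ //; rewrite -EFinB ltry.
- apply: measurable_realfun.measurable_funM.
    by apply: mshift => // y /Hy[].
  apply: (measurable_funS _ _ mf) => // y /Hy[h _].
  by rewrite /= in_itv /= andbT.
- move=> y /Hy[h1 h2]; rewrite normrM.
  by apply: ler_pM => //; apply: HMb.
Qed.

Lemma disjP (A B : set R) : (forall y, A y -> B y -> False) -> [disjoint A & B].
Proof.
move=> H; apply/eqP/seteqP; split => y //=.
by move=> [Ay By]; exact: H Ay By.
Qed.

Lemma T1_est (e : R) : 0 < e -> exists M, forall x, M < x -> 0 < f x /\
  `|Rintegral F `[0, xh[%classic (fun y => f (x - y)) - fine (F `[0, xh[%classic) * f x| <= e * f x.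
Proof.
move=> e0; have [M HM] := @LTneg xh e e0.
have [Mb [Mb0 HMb]] := fbound.
exists (Num.max M (2 * xh)) => x; move/gtmax => [xM x2].
have [fx Hx] := HM x xM; split => //.
pose D : set R := `[0, xh[%classic; rewrite -/D.
have mD : measurable D by exact: measurable_itv.
have FD : (F D < +oo)%E by rewrite -(fineK (Ffin mD)) ltry.
have sh y : D y -> 0 <= y <= xh /\ xh <= x - y.
  by rewrite /D /= in_itv /= => /andP[h1 h2]; split; [apply/andP; split; lra | lra].
have mh : measurable_fun D (fun y => f (x - y)) by apply: mshift => // y /sh[].
have i0 : F.-integrable D (EFin \o (fun y => f (x - y))).
  apply: (@bint _ _ F D _ Mb) => // y /sh[_ h]; exact: HMb.
have i1 : F.-integrable D (EFin \o (fun y => f (x - y) - f x)).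
  apply: (@bint _ _ F D _ (Mb + Mb)) => //.
    by apply: measurable_funB => //; exact: measurable_cst.
  move=> y /sh[_ h]; apply: le_trans (ler_normB _ _) _.
  apply: lerD; [exact: HMb | apply: HMb]; have := xh0; lra.
have ic c : F.-integrable D (EFin \o (fun _ => c)).
  by apply: (@bint _ _ F D _ `|c|) => //; exact: measurable_cst.
have E1 : Rintegral F D (fun y => f (x - y)) - fine (F D) * f x =
    Rintegral F D (fun y => f (x - y) - f x).
  by rewrite RintegralB // Rintegral_cst // mulrC.
have [p0 p1] : 0 <= fine (F D) /\ fine (F D) <= 1 by have /andP[] := Fle1 mD.
rewrite [X in `|X|](_ : _ = Rintegral F D (fun y => f (x - y) - f x)); last exact: E1.
rewrite ler_norml; apply/andP; split.
- have H1 : Rintegral F D (fun _ => - (e * f x)) <= Rintegral F D (fun y => f (x - y) - f x).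
    apply: le_Rintegral => // y /sh[h1 h2]; have := Hx y h1.
    rewrite ler_norml => /andP[]; lra.
  rewrite Rintegral_cst // in H1; apply: le_trans H1.
  have : 0 <= e * f x by rewrite mulr_ge0 // ltW.
  move: (e * f x) => c c0; nra.
- have H1 : Rintegral F D (fun y => f (x - y) - f x) <= Rintegral F D (fun _ => e * f x).
    apply: le_Rintegral => // y /sh[h1 h2]; have := Hx y h1.
    rewrite ler_norml => /andP[]; lra.
  rewrite Rintegral_cst // in H1; apply: le_trans H1 _.
  have : 0 <= e * f x by rewrite mulr_ge0 // ltW.
  move: (e * f x) => c c0; nra.
Qed.

Lemma GQ : fine (F `[0, xh[%classic) + fine (F `[xh, +oo[%classic) = 1.
Proof.
have : F `[0%R, +oo[%classic = (F `[0%R, xh[%classic + F `[xh, +oo[%classic)%E.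
  rewrite -measureU //; last first.
    apply/seteqP; split => y //= []; rewrite !in_itv /= => /andP[h1 h2] h3; lra.
  congr (F _); rewrite -itv_bndbnd_setU // bnd_simp //.
rewrite F0 -(fineK (Ffin (B := `[0, xh[%classic) _)) //.
rewrite -(fineK (Ffin (B := `[xh, +oo[%classic) _)) // -EFinD.
by move=> [->].
Qed.

Lemma tail (e : R) : 0 < e -> exists A : R, forall B : R, A <= B ->
  fine (F `]B, +oo[%classic) <= e.
Proof.
move=> e0.
pose S (n : nat) : set R := `]n%:R, +oo[%classic.
have mS n : measurable (S n) by exact: measurable_itv.
have bc : \bigcap_n S n = set0.
  apply/seteqP; split => y //= Hy.
  have := Hy (Num.Def.archi_bound `|y|) I; rewrite /S /= in_itv /= andbT.
  have := archi_boundP (normr_ge0 y); have := ler_norm y; lra.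
have ni : {homo S : n m / (n <= m)%N >-> (m <= n)%O}.
  move=> n m nm; rewrite subsetEset => y; rewrite /S /= !in_itv /= !andbT.
  have : (n%:R <= m%:R :> R) by rewrite ler_nat.
  lra.
have cv := @nonincreasing_cvg_mu _ _ _ F S (_ : _) mS (_ : _) ni.
rewrite bc measure0 in cv.
have cv' := cv (le_lt_trans (probability_le1 F (mS 0%N)) (ltry 1)) measurable0.
move/fine_cvgP: cv' => [_ cv2].
move/cvgrPdist_le: cv2 => /(_ e e0) [N _ HN].
have := HN N (leqnn N); rewrite /= sub0r normrN => HN'.
exists N%:R => B NB.
have mB : measurable (`]B, +oo[%classic : set R) by exact: measurable_itv.
apply: le_trans HN'; apply: le_trans (ler_norm _).
apply: fine_le; [exact: Ffin | exact: Ffin |].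
apply: le_measure; rewrite ?inE //.
move=> y; rewrite /S /= !in_itv /= !andbT; lra.
Qed.

Lemma intD (x : R) (D : set R) (h : R -> R) (B : R) : measurable D ->
  D `<=` `[xh, x - xh] -> measurable_fun D h -> (forall y, D y -> `|h y| <= B) ->
  mu.-integrable D (EFin \o h).
Proof.
move=> mD DS mh hB; apply: (@bint _ _ mu D h B) => //.
apply: (@le_lt_trans _ _ (mu `[xh, x - xh])).
  by apply: le_measure => //; rewrite inE.
by rewrite lebesgue_measure_itv /=; case: ifP => _ //; rewrite -EFinB ltry.
Qed.

Lemma int_meas (D : set R) (h : R -> R) : mu.-integrable D (EFin \o h) ->
  measurable_fun D h.
Proof. by move=> /(measurable_int mu) /measurable_EFinP. Qed.

Lemma key :
  (forall e : R, 0 < e -> exists M, forall x, M < x -> 0 < f x /\ exists k,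
      xh <= k <= x / 2 /\
      (forall y, xh <= y <= k -> `|f (x - y) - f x| <= e * f x) /\
      fine (F `]k, +oo[%classic) <= e /\
      Rintegral mu `]k, x / 2]%classic (fun y => f (x - y) * f y) <= e * f x) ->
  forall e : R, 0 < e -> exists M, forall x, M < x -> 0 < f x /\
    `|Rintegral mu `[xh, x / 2]%classic (fun y => f (x - y) * f y)
      - fine (F `[xh, +oo[%classic) * f x| <= e * f x.
Proof.
move=> H e e0; have e3 : 0 < e / 3 by rewrite divr_gt0.
have [M HM] := H _ e3; exists M => x /HM [fx [k [/andP[k1 k2] [Ha [Hb Hc]]]]].
split => //.
have [Mb [Mb0 HMb]] := fbound.
have xhx : xh <= x - xh by lra.
have sp : `[xh, x / 2]%classic = `[xh, k]%classic `|` `]k, x / 2]%classic.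
  by rewrite -itv_bndbnd_setU // bnd_simp.
have s1 : `[xh, x / 2]%classic `<=` `[xh, x - xh]%classic.
  by move=> y; rewrite /= !in_itv /= => /andP[h1 h2]; apply/andP; split; lra.
have s2 : `[xh, k]%classic `<=` `[xh, x - xh]%classic.
  by move=> y; rewrite /= !in_itv /= => /andP[h1 h2]; apply/andP; split; lra.
have s3 : `[xh, k]%classic `<=` `[xh, +oo[%classic.
  by move=> y; rewrite /= !in_itv /= => /andP[h1 h2]; rewrite andbT.
have m0 : measurable (`[xh, x / 2]%classic : set R) by exact: measurable_itv.
have m1 : measurable (`[xh, k]%classic : set R) by exact: measurable_itv.
have m2 : measurable (`]k, x / 2]%classic : set R) by exact: measurable_itv.
have iU := @int_conv x _ m0 s1.
have dj : [disjoint `[xh, k]%classic & `]k, x / 2]%classic].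
  by apply: disjP => y; rewrite /= !in_itv /= => /andP[_ h1] /andP[h2 _]; lra.
have E := @Rintegral_setU _ _ _ mu _ _ (fun y => f (x - y) * f y) m1 m2 (ltac:(by rewrite -sp)) dj.
rewrite [X in `|X - _|](_ : _ = Rintegral mu `[xh, k]%classic (fun y => f (x - y) * f y)
   + Rintegral mu `]k, x / 2]%classic (fun y => f (x - y) * f y)); last first.
  by rewrite -E -sp.
set P := fine (F `[xh, k]%classic).
have [P0 P1] : 0 <= P /\ P <= 1 by have /andP[] := Fle1 m1.
have RP : Rintegral mu `[xh, k]%classic f = P := Rint_f m1 s3.
have if1 := int_f m1 s3.
have ic1 := @int_conv x _ m1 s2.
have mf1 : measurable_fun (`[xh, k]%classic : set R) f := measurable_funS _ s3 mf.
have icf (c : R) : mu.-integrable `[xh, k]%classic (EFin \o (fun y => c * f y)).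
  apply: (@intD x _ _ (`|c| * Mb) m1 s2).
    by apply: measurable_funM; [exact: measurable_cst | exact: mf1].
  move=> y /s3; rewrite /= in_itv /= andbT => hy.
  by rewrite normrM ler_wpM2l // HMb.
have cP (c : R) : Rintegral mu `[xh, k]%classic (fun y => c * f y) = c * P.
  by rewrite RintegralZl // RP.
have J1 : `|Rintegral mu `[xh, k]%classic (fun y => f (x - y) * f y) - P * f x|
    <= e / 3 * f x.
  rewrite -[P * f x]mulrC -cP -RintegralB //.
  have idf : mu.-integrable `[xh, k]%classic
      (EFin \o (fun y => f (x - y) * f y - f x * f y)).
    apply: (@intD x _ _ (Mb * Mb + `|f x| * Mb) m1 s2).
      apply: measurable_funB; first exact: int_meas ic1.
      exact: int_meas (icf (f x)).
    move=> y Dy; apply: le_trans (ler_normB _ _) _.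
    have /= := s2 _ Dy; rewrite in_itv /= => /andP[hy1 hy2].
    apply: lerD; rewrite normrM; last by rewrite ler_wpM2l // HMb.
    by apply: ler_pM => //; apply: HMb; lra.
  have pt y : `[xh, k]%classic y ->
      - (e / 3 * f x) * f y <= f (x - y) * f y - f x * f y <= e / 3 * f x * f y.
    rewrite /= in_itv /= => /andP[hy1 hy2].
    have fy : 0 <= f y by apply: f_ge0.
    have := Ha y (ltac:(by rewrite hy1 hy2)); rewrite ler_norml => /andP[h1 h2].
    apply/andP; split; nra.
  have L1 := @le_Rintegral _ _ _ mu _ _ _ m1 (icf (- (e / 3 * f x))) idf (fun y Dy => proj1 (andP (pt y Dy))).
  have L2 := @le_Rintegral _ _ _ mu _ _ _ m1 idf (icf (e / 3 * f x)) (fun y Dy => proj2 (andP (pt y Dy))).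
  rewrite cP in L1; rewrite cP in L2.
  have : 0 <= e / 3 * f x by rewrite mulr_ge0 // ltW.
  move: (e / 3 * f x) L1 L2 => c L1 L2 c0.
  rewrite ler_norml; apply/andP; split; nra.
have QP : fine (F `[xh, +oo[%classic) = P + fine (F `]k, +oo[%classic).
  have mk : measurable (`]k, +oo[%classic : set R) by exact: measurable_itv.
  rewrite /P -fineD ?Ffin //; congr fine.
  rewrite -measureU //; last first.
    by apply/seteqP; split => y //= []; rewrite !in_itv /= => /andP[h1 h2] /andP[h3 h4]; lra.
  by rewrite -itv_bndbnd_setU // bnd_simp.
have [T0 _] : 0 <= fine (F `]k, +oo[%classic) /\ True.
  by split => //; have /andP[] := Fle1 (measurable_itv `]k, +oo[).
have J2 : 0 <= Rintegral mu `]k, x / 2]%classic (fun y => f (x - y) * f y).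
  apply: Rintegral_ge0 => y; rewrite /= in_itv /= => /andP[h1 h2].
  by rewrite mulr_ge0 // f_ge0 //; lra.
have Tf : fine (F `]k, +oo[%classic) * f x <= e / 3 * f x.
  by apply: ler_wpM2r => //; exact: ltW.
have cv3 : e * f x / 3 = e / 3 * f x by rewrite mulrAC.
rewrite QP mulrDl; apply: fin_arith; rewrite ?cv3 //.
by rewrite mulr_ge0 // ltW.
Qed.

End Prop11.



Lemma conc_prod (R : realType) (f : R -> R) (x0 a b y : R) :
  concave_on (fun x => - ln (f x)) `[x0, +oo[%classic ->
  x0 <= a -> a < b -> a <= y <= b -> 0 < f a -> 0 < f b -> 0 < f y ->
  0 < f (a + b - y) -> f y * f (a + b - y) <= f a * f b.
Proof.
move=> Hc xa ab /andP[ay yb] fa fb fy fz.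
have ba : b - a != 0 by rewrite subr_eq0 gt_eqF.
pose l := (b - y) / (b - a).
have l0 : 0 <= l by rewrite divr_ge0 // subr_ge0 // ltW.
have l1 : l <= 1 by rewrite ler_pdivrMr ?subr_gt0 // mul1r lerD2l lerN2.
have e1 : l * a + (1 - l) * b = y by rewrite /l; field.
have e2 : l * b + (1 - l) * a = a + b - y by rewrite /l; field.
have ina : `[x0, +oo[%classic a by rewrite /= in_itv /= xa.
have inb : `[x0, +oo[%classic b by rewrite /= in_itv /= (le_trans xa (ltW ab)).
have := Hc a b l ina inb (ltac:(by rewrite l0 l1)); rewrite e1 => h1.
have := Hc b a l inb ina (ltac:(by rewrite l0 l1)); rewrite e2 => h2.
have : ln (f y * f (a + b - y)) <= ln (f a * f b).
  rewrite !lnM ?posrE //.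
  move: h1 h2; move: (ln (f a)) (ln (f b)) (ln (f y)) (ln (f (a + b - y))) => p q r s h1 h2.
  nra.
by rewrite ler_ln ?posrE ?mulr_gt0.
Qed.

Section Part2.
Variable R : realType.
Variables (F : probability R R) (f : R -> R) (xh : R).
Hypothesis LT : long_tailed_density f xh.
Hypotheses (xh0 : 0 <= xh) (F0 : F `[0%R, +oo[%classic = 1%E)
  (Fd : has_density_on F f xh).
Local Notation mu := (@lebesgue_measure R).

Let int_conv' := @int_conv R F f xh LT Fd.
Let f_ge0' := @f_ge0 R F f xh Fd.

Lemma T2_split (x : R) : 2 * xh < x ->
  Rintegral mu `[xh, x - xh]%classic (fun y => f (x - y) * f y) =
  2 * Rintegral mu `[xh, x / 2]%classic (fun y => f (x - y) * f y).
Proof.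
move=> x2.
have m0 : measurable (`[xh, x / 2]%classic : set R) by exact: measurable_itv.
have m3 : measurable (`]x / 2, x - xh]%classic : set R) by exact: measurable_itv.
have m4 : measurable (`[xh, x - xh]%classic : set R) by exact: measurable_itv.
have m5 : measurable (`[xh, x / 2[%classic : set R) by exact: measurable_itv.
have sp : `[xh, x - xh]%classic = `[xh, x / 2]%classic `|` `]x / 2, x - xh]%classic.
  by rewrite -itv_bndbnd_setU // bnd_simp; lra.
have iU := int_conv' x _ m4 (@subset_refl _ _).
have dj : [disjoint `[xh, x / 2]%classic & `]x / 2, x - xh]%classic].
  by apply: disjP => y; rewrite /= !in_itv /= => /andP[_ h1] /andP[h2 _]; lra.
have E := @Rintegral_setU _ _ _ mu _ _ (fun y => f (x - y) * f y) m0 m3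
  (ltac:(by rewrite -sp)) dj.
rewrite sp E.
have s3 : `]x / 2, x - xh]%classic `<=` `[xh, x - xh]%classic.
  by move=> y; rewrite /= !in_itv /= => /andP[h1 h2]; apply/andP; split; lra.
have s5 : `[xh, x / 2[%classic `<=` `[xh, x - xh]%classic.
  by move=> y; rewrite /= !in_itv /= => /andP[h1 h2]; apply/andP; split; lra.
rewrite (@refl_int R x _ _ m3 (@int_meas R _ _ (int_conv' x _ m3 s3))); last first.
  move=> y; rewrite /= in_itv /= => /andP[h1 h2].
  by rewrite mulr_ge0 // f_ge0' //; lra.
have -> : (fun y => x - y) @^-1` `]x / 2, x - xh]%classic = `[xh, x / 2[%classic.
  by apply/seteqP; split => y /=; rewrite !in_itv /= => /andP[h1 h2]; apply/andP; split; lra.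
rewrite (@eq_Rintegral _ _ _ mu `[xh, x / 2[%classic (fun y => f (x - y) * f y)); last first.
  move=> y _ /=; rewrite (_ : x - (x - y) = y); [exact: mulrC | ring].
rewrite Rintegral_itv_bndo_bndc; last exact: int_conv' x _ m5 s5.
by rewrite mulr_natl mulr2n.
Qed.

End Part2.



Lemma ratio_abs (R : realType) (a b e : R) : 0 < b -> `|a / b - 1| <= e ->
  `|a - b| <= e * b.
Proof.
move=> b0 H; have -> : a - b = (a / b - 1) * b by rewrite mulrBl divfK ?gt_eqF // mul1r.
by rewrite normrM (gtr0_norm b0); apply: ler_wpM2r => //; exact: ltW.
Qed.

Lemma arith2 (R : realType) (fa fb fx x a e : R) : 0 <= fa -> 0 <= fb ->
  fb <= 2 * fx -> 0 <= x / 2 - a -> x / 2 - a <= x -> x * fa <= e / 2 ->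
  0 <= fx -> fa * fb * (x / 2 - a) <= e * fx.
Proof.
move=> fa0 fb0 fb2 d0 dx xf fx0.
have h1 : fa * fb * (x / 2 - a) <= fa * (2 * fx) * (x / 2 - a).
  by apply: ler_wpM2r => //; apply: ler_wpM2l.
have h2 : fa * (2 * fx) * (x / 2 - a) <= fa * (2 * fx) * x.
  by apply: ler_wpM2l => //; rewrite mulr_ge0 // mulr_ge0.
have h3 : fa * (2 * fx) * x = (2 * fx) * (x * fa) by ring.
have h4 : (2 * fx) * (x * fa) <= (2 * fx) * (e / 2).
  by apply: ler_wpM2l => //; rewrite mulr_ge0.
have h5 : (2 * fx) * (e / 2) = e * fx by field.
lra.
Qed.

Section Part3.
Variable R : realType.
Variables (F : probability R R) (f : R -> R) (xh : R).
Hypothesis LT : long_tailed_density f xh.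
Hypotheses (xh0 : 0 <= xh) (F0 : F `[0%R, +oo[%classic = 1%E)
  (Fd : has_density_on F f xh).
Local Notation mu := (@lebesgue_measure R).

Let int_conv' := @int_conv R F f xh LT Fd.
Let f_ge0' := @f_ge0 R F f xh Fd.
Let tail' := @tail R F.
Let LTneg' := @LTneg R f xh LT.
Let fbound' := @fbound R f xh LT.
Let pos_ev' := @pos_ev R f xh LT.
Let Rint_f' := @Rint_f R F f xh Fd.
Let int_f' := @int_f R F f xh Fd.

Definition KeyHyp := forall e : R, 0 < e -> exists M, forall x, M < x -> 0 < f x /\ exists k,
      xh <= k <= x / 2 /\
      (forall y, xh <= y <= k -> `|f (x - y) - f x| <= e * f x) /\
      fine (F `]k, +oo[%classic) <= e /\
      Rintegral mu `]k, x / 2]%classic (fun y => f (x - y) * f y) <= e * f x.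

Lemma case1 (c : R) : 0 < c ->
  (\forall x \near +oo, forall y : R, x < y <= 2 * x -> c * f x <= f y) ->
  KeyHyp.
Proof.
move=> c0 /near_ex [Mc HMc] e e0.
have xh0' := xh0.
pose et := Num.min e (e * c).
have et0 : 0 < et by rewrite lt_min e0 mulr_gt0.
have ete : et <= e by rewrite ge_min lexx.
have etc : et <= e * c by rewrite ge_min lexx orbT.
have [A HA] := tail' et et0.
pose A' := Num.max A xh.
have AA' : A <= A' by rewrite le_max lexx.
have xhA' : xh <= A' by rewrite le_max lexx orbT.
have [M1 HM1] := LTneg' A' e e0.
have [Mb [Mb0 HMb]] := fbound'.
exists (Num.max M1 (Num.max (2 * A') (2 * Mc))) => x /gtmax [x1 /gtmax [x2 x3]].
have [fx Hx] := HM1 x x1; split => //.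
exists A'; split; first by apply/andP; split => //; lra.
split; first by move=> y /andP[y1 y2]; apply: Hx; apply/andP; split => //; lra.
split; first exact: le_trans (HA A' AA') ete.
have mD : measurable (`]A', x / 2]%classic : set R) by exact: measurable_itv.
have sD : `]A', x / 2]%classic `<=` `[xh, x - xh]%classic.
  by move=> y; rewrite /= !in_itv /= => /andP[h1 h2]; apply/andP; split; lra.
have sD2 : `]A', x / 2]%classic `<=` `[xh, +oo[%classic.
  by move=> y; rewrite /= !in_itv /= => /andP[h1 h2]; rewrite andbT; lra.
have pt y : `]A', x / 2]%classic y -> f (x - y) * f y <= f x / c * f y.
  rewrite /= in_itv /= => /andP[h1 h2].
  have fy : 0 <= f y by apply: f_ge0'; lra.
  have h : c * f (x - y) <= f x by apply: HMc; [lra | apply/andP; split; lra].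
  apply: ler_wpM2r => //; rewrite ler_pdivlMr // mulrC //.
have iD := int_conv' x _ mD sD.
have icf : mu.-integrable `]A', x / 2]%classic (EFin \o (fun y => f x / c * f y)).
  apply: (@intD R xh x _ _ (`|f x / c| * Mb) mD sD).
    apply: measurable_funM; first exact: measurable_cst.
    exact: measurable_funS _ sD2 (@mf R F f xh Fd).
  move=> y /sD2; rewrite /= in_itv /= andbT => hy.
  by rewrite normrM ler_wpM2l // HMb.
have L := @le_Rintegral _ _ _ mu _ _ _ mD iD icf pt.
apply: le_trans L _.
rewrite RintegralZl //; last exact: int_f' mD sD2.
rewrite Rint_f' //.
have mk : measurable (`]A', +oo[%classic : set R) by exact: measurable_itv.
have FD : fine (F `]A', x / 2]%classic) <= e * c.
  apply: le_trans _ (le_trans (HA A' AA') etc).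
  apply: fine_le; [exact: Ffin | exact: Ffin |].
  apply: le_measure; rewrite ?inE //.
  by move=> y; rewrite /= !in_itv /= => /andP[h1 h2]; rewrite andbT.
apply: le_trans (ler_wpM2l _ FD) _; first by rewrite divr_ge0 // ltW.
by rewrite mulrCA divfK ?gt_eqF.
Qed.

End Part3.



Lemma final_arith (R : realType) (T1 I G Q fx e : R) : 0 < fx -> 0 < e -> G + Q = 1 ->
  `|T1 - G * fx| <= e / 4 * fx -> `|I - Q * fx| <= e / 4 * fx ->
  `|1 - (2 * T1 + 2 * I) / (2 * fx)| <= e.
Proof.
move=> fx0 e0 GQ h1 h2.
have -> : 1 - (2 * T1 + 2 * I) / (2 * fx) = ((G * fx - T1) + (Q * fx - I)) / fx.
  have -> : Q = 1 - G by lra.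
  by field; rewrite gt_eqF.
rewrite normrM normfV (gtr0_norm fx0) ler_pdivrMr //.
apply: le_trans (ler_normD _ _) _.
rewrite distrC in h1; rewrite distrC in h2.
have : e / 4 * fx + e / 4 * fx <= e * fx by nra.
lra.
Qed.

Section Part4.
Variable R : realType.
Variables (F : probability R R) (f : R -> R) (xh : R).
Hypothesis LT : long_tailed_density f xh.
Hypotheses (xh0 : 0 <= xh) (F0 : F `[0%R, +oo[%classic = 1%E)
  (Fd : has_density_on F f xh).
Local Notation mu := (@lebesgue_measure R).

Let int_conv' := @int_conv R F f xh LT Fd.
Let tail' := @tail R F.
Let pos_ev' := @pos_ev R f xh LT.

Lemma case2 (x0 : R) (h : R -> R) :
  concave_on (fun x => - ln (f x)) `[x0, +oo[%classic ->
  h x @[x --> +oo] --> +oo ->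
  (forall eps : R, 0 < eps -> \forall x \near +oo,
         forall t : R, `|t| <= h x -> `|f (x + t) / f x - 1| <= eps) ->
  (fun x => x * expR (- (- ln (f (h x))))) x @[x --> +oo] --> (0 : R) ->
  KeyHyp R F f xh.
Proof.
move=> Hc hinf HU Hp e e0.
have xh0' := xh0.
pose e1 := Num.min e 1.
have e10 : 0 < e1 by rewrite lt_min e0 ltr01.
have e1e : e1 <= e by rewrite ge_min lexx.
have e11 : e1 <= 1 by rewrite ge_min lexx orbT.
have [Mp Hfp] := pos_ev'.
have [A HA] := tail' e e0.
pose A' := Num.max (Num.max A xh) (Num.max x0 (Mp + 1)).
have AA : A <= A' by rewrite !le_max lexx !(orbT, orTb).
have xhA : xh <= A' by rewrite !le_max lexx !(orbT, orTb).
have x0A : x0 <= A' by rewrite !le_max lexx !(orbT, orTb).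
have MpA : Mp + 1 <= A' by rewrite !le_max lexx !(orbT, orTb).
have /near_ex [Mh HMh] : \forall x \near +oo, A' < h x by move/cvgryPgt : hinf; apply.
have /near_ex [Mu HMu] := HU e1 e10.
have /near_ex [Mq HMq] : \forall x \near +oo,
    `|0 - x * expR (- (- ln (f (h x))))| <= e / 2.
  by move/cvgrPdist_le : Hp; apply; rewrite divr_gt0.
exists (Num.max Mh (Num.max Mu (Num.max Mq (Num.max (2 * A') Mp)))).
move=> x /gtmax [x1 /gtmax [x2 /gtmax [x3 /gtmax [x4 x5]]]].
have fx := Hfp x x5; split => //.
have hA := HMh x x1.
have HU1 := HMu x x2.
have HQ := HMq x x3.
pose k := if h x < x / 2 then h x else x / 2.
have [kh [kx kA]] : k <= h x /\ k <= x / 2 /\ A' < k.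
  by rewrite /k; case: ltP => hx; split; try split; lra.
exists k; split; first by apply/andP; split; lra.
split.
  move=> y /andP[y1 y2].
  have := HU1 (- y); rewrite normrN ger0_norm; last lra.
  move=> /(_ ltac:(lra)) H; apply: le_trans (@ratio_abs R _ _ _ fx H) _.
  by apply: ler_wpM2r => //; exact: ltW.
split; first by apply: HA; lra.
rewrite /k; case: ltP => hx; last first.
  have -> : `]x / 2, x / 2]%classic = set0 :> set R.
    by apply/seteqP; split => y //=; rewrite in_itv /= => /andP[h1 h2]; lra.
  by rewrite Rintegral_set0 mulr_ge0 // ltW.
move: hx hA kh kx kA HU1 HQ; set a := h x => hx hA kh kx kA HU1 HQ.
have fa : 0 < f a by apply: Hfp; lra.
have fxa : 0 < f (x - a) by apply: Hfp; lra.
have fxa2 : f (x - a) <= 2 * f x.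
  have := HU1 (- a); rewrite normrN ger0_norm; last lra.
  move=> /(_ (lexx _)) H; have := @ratio_abs R _ _ _ fx H.
  rewrite ler_norml => /andP[_ H2]; nra.
have pt y : `]a, x / 2]%classic y -> f (x - y) * f y <= f a * f (x - a).
  rewrite /= in_itv /= => /andP[h1 h2].
  have e3 : a + (x - a) - y = x - y by ring.
  have fy : 0 < f y by apply: Hfp; lra.
  have fxy : 0 < f (x - y) by apply: Hfp; lra.
  have := @conc_prod R f x0 a (x - a) y Hc ltac:(lra) ltac:(lra)
    ltac:(by apply/andP; split; lra) fa fxa fy ltac:(by rewrite e3).
  by rewrite e3 mulrC.
have mD : measurable (`]a, x / 2]%classic : set R) by exact: measurable_itv.
have sD : `]a, x / 2]%classic `<=` `[xh, x - xh]%classic.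
  by move=> y; rewrite /= !in_itv /= => /andP[h1 h2]; apply/andP; split; lra.
have iD := int_conv' x _ mD sD.
have ic := @intD R xh x _ (fun _ => f a * f (x - a)) `|f a * f (x - a)| mD sD
  (measurable_cst _) (fun _ _ => lexx _).
have L := @le_Rintegral _ _ _ mu _ _ _ mD iD ic pt.
apply: le_trans L _.
rewrite Rintegral_cst //.
have -> : fine (mu `]a, x / 2]%classic) = x / 2 - a.
  by rewrite lebesgue_measure_itv /= lte_fin hx -EFinB.
rewrite opprK lnK ?posrE // sub0r normrN in HQ.
apply: arith2 => //; try lra.
all: try (exact: ltW).
exact: le_trans (ler_norm _) HQ.
Qed.

End Part4.

Theorem proposition11 (R : realType) (F : probability R R) (f : R -> R) (xh : R) :
  0 <= xh ->
  F `[0%R, +oo[%classic = 1%E ->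
  has_density_on F f xh ->
  long_tailed_density f xh ->
  ((exists c : R, 0 < c /\
      \forall x \near +oo, forall y : R, x < y <= 2 * x -> c * f x <= f y)
   \/
   (exists x0 : R, exists h : R -> R,
      concave_on (fun x => - ln (f x)) `[x0, +oo[%classic /\
      h x @[x --> +oo] --> +oo /\
      (forall eps : R, 0 < eps -> \forall x \near +oo,
         forall t : R, `|t| <= h x -> `|f (x + t) / f x - 1| <= eps) /\
      (fun x => x * expR (- (- ln (f (h x))))) x @[x --> +oo] --> (0 : R))) ->
  S_ac F f xh.
Proof.
move=> xh0 F0 Fd LT Hcase.
have KH : KeyHyp R F f xh.
  case: Hcase => [[c [c0 Hc]] | [x0 [h [Hc [hinf [HU Hp]]]]]].
  - exact: (@case1 R F f xh LT xh0 Fd c c0 Hc).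
  - by eapply case2; eassumption.
split => //.
apply/cvgrPdist_le => e e0.
have e4 : 0 < e / 4 by rewrite divr_gt0.
have [M1 H1] := @T1_est R F f xh LT xh0 Fd (e / 4) e4.
have [M2 H2] := @key R F f xh LT Fd KH (e / 4) e4.
apply: (@ex_near R _ (Num.max M1 (Num.max M2 (2 * xh)))).
move=> x /gtmax [x1 /gtmax [x2 x3]].
have [fx h1] := H1 x x1; have [_ h2] := H2 x x2.
rewrite (@T2_split R F f xh LT Fd x x3).
apply: final_arith => //.
- exact: (@GQ R F xh xh0 F0).
- exact: h1.
- exact: h2.
Qed.
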